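(* For each integer $n\ge 1$ there exists a 6-stack of rank $n$, and any two 6-stacks of rank $n$ are isomorphic.
   Context: All posets are finite. For a poset $P$ and $p\in P$, the rank $r(p)$ of $p$ is the largest $m$ such that there is a chain $p_0<p_1<\dots<p_m=p$ in $P$. The poset $P$ is ranked of rank $r(P)$ if every maximal chain of $P$ has exactly $r(P)+1$ elements. For integers $0\le i\le j$, $P(i,j)=\{p\in P: i\le r(p)\le j\}$ and $P(i)=P(i,i)$, each with the induced order. The 6-crown $C_6$ is the poset on $\{x_0,x_1,x_2,y_0,y_1,y_2\}$ whose only strict comparabilities are $x_0<y_0>x_1<y_1>x_2<y_2>x_0$. A 6-stack is a ranked poset $P$ of rank $n\ge 1$ such that for each $0\le i<n$, $P(i,i+1)$ is isomorphic to $C_6$. *)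

(* Defs.v *)
From mathcomp Require Import all_boot.
Set Warnings "-notation-overridden".

Set Implicit Arguments.
Unset Strict Implicit.
Unset Printing Implicit Defensive.

Section FinPoset.
Variables (T : finType) (le : rel T).

Definition is_poset : Prop :=
  [/\ forall x, le x x,
      forall x y, le x y -> le y x -> x = y &
      forall x y z, le x y -> le y z -> le x z].

Definition plt (x y : T) : bool := (x != y) && le x y.

Definition is_chain (A : {set T}) : bool :=
  [forall x in A, forall y in A, le x y || le y x].

Definition is_maximal_chain (A : {set T}) : bool :=
  is_chain A && [forall B : {set T}, (is_chain B && (A \subset B)) ==> (B == A)].

(* rank of p: the largest m such that there is a chain p_0 < ... < p_m = p,
   i.e. (number of elements of a largest chain with maximum p) - 1 *)
Definition rank (p : T) : nat :=
  (\max_(A : {set T} | is_chain A && (p \in A) && [forall x in A, le x p]) #|A|).-1.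

Definition ranked_of_rank (r : nat) : Prop :=
  forall A : {set T}, is_maximal_chain A -> #|A| = r.+1.

Definition level_set (i j : nat) : {set T} := [set p | i <= rank p <= j].
Definition level_carrier (i j : nat) : finType := {x : T | x \in level_set i j}.
Definition level_le (i j : nat) : rel (level_carrier i j) :=
  fun a b => le (val a) (val b).

End FinPoset.
Arguments level_le {T} le i j.

Definition poset_iso (T1 T2 : finType) (le1 : rel T1) (le2 : rel T2) : Prop :=
  exists f : T1 -> T2, bijective f /\ forall x y, le1 x y = le2 (f x) (f y).

(* The 6-crown C_6 on 'I_6: x_k is k and y_k is 3+k (k = 0,1,2).
   Strict comparabilities: x0<y0>x1<y1>x2<y2>x0. *)
Definition crown6_le : rel 'I_6 :=
  fun a b => (a == b) ||
    ((val a, val b) \in [:: (0,3); (1,3); (1,4); (2,4); (2,5); (0,5)]).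

Definition six_stack (T : finType) (le : rel T) (n : nat) : Prop :=
  [/\ is_poset le, 1 <= n, ranked_of_rank le n &
      forall i, i < n -> poset_iso (level_le le i i.+1) crown6_le].

(* Main.v *)
Require Import Defs.
Set Warnings "-notation-overridden".
From mathcomp Require Import all_boot zify.
Set Implicit Arguments.
Unset Strict Implicit.
Unset Printing Implicit Defensive.

Section Gen.
Variables (T : finType) (le : rel T).
Hypothesis hpo : is_poset le.

Lemma le_refl x : le x x. Proof. by case: hpo. Qed.
Lemma le_anti x y : le x y -> le y x -> x = y. Proof. by case: hpo => _ H _; apply: H. Qed.
Lemma le_trans x y z : le x y -> le y z -> le x z. Proof. by case: hpo => _ _ H; apply: H. Qed.

Definition rkP p (A : {set T}) := is_chain le A && (p \in A) && [forall x in A, le x p].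

Lemma rkP1 p : rkP p [set p].
Proof.
rewrite /rkP set11 andbT; apply/andP; split.
  by apply/forallP=> x; apply/implyP; rewrite inE => /eqP->; apply/forallP=> y;
     apply/implyP; rewrite inE => /eqP->; rewrite le_refl.
by apply/forallP=> x; apply/implyP; rewrite inE => /eqP->; rewrite le_refl.
Qed.

Lemma rank_ub p A : rkP p A -> #|A| <= (rank le p).+1.
Proof.
move=> hA; rewrite /rank.
have := @leq_bigmax_cond _ (rkP p) (fun A : {set T} => #|A|) A hA.
have : 0 < \max_(A0 | is_chain le A0 && (p \in A0) && [forall x0 in A0, le x0 p]) #|A0|.
  apply: leq_trans (@leq_bigmax_cond _ (rkP p) (fun A : {set T} => #|A|) _ (rkP1 p)).
  by rewrite cards1.
by case: (\max_(_ | _) _).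
Qed.

Lemma rank_ex p : exists2 A, rkP p A & #|A| = (rank le p).+1.
Proof.
have h0 : 0 < #|[pred A | rkP p A]|.
  by apply/card_gt0P; exists [set p]; rewrite inE rkP1.
have [A0 hA0 e] := @eq_bigmax_cond _ _ (fun A : {set T} => #|A|) h0.
exists A0; first by move: hA0; rewrite inE.
rewrite /rank.
have -> : \max_(A | is_chain le A && (p \in A) && [forall x in A, le x p]) #|A| =
          \max_(A in [pred A | rkP p A]) #|A| by apply: eq_bigl => A; rewrite inE.
rewrite e; move: hA0; rewrite inE => /andP[/andP[_ pA] _].
have : 0 < #|A0| by apply/card_gt0P; exists p.
by case: #|A0|.
Qed.

Lemma chainP (A : {set T}) : reflect (forall x y, x \in A -> y \in A -> le x y || le y x) (is_chain le A).
Proof.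
apply: (iffP forallP) => [H x y xA yA | H x].
  by move/implyP: (H x) => /(_ xA) /forallP /(_ y) /implyP; apply.
by apply/implyP=> xA; apply/forallP=> y; apply/implyP=> yA; apply: H.
Qed.

Lemma rank_mono x y : plt le x y -> rank le x < rank le y.
Proof.
case/andP=> nxy lxy.
have [A /andP[/andP[cA xA] /forallP bA] eA] := rank_ex x.
have bA' z : z \in A -> le z x by move=> zA; move/implyP: (bA z); apply.
have yA : y \notin A.
  apply/negP=> yA; have := le_anti lxy (bA' _ yA); by move/eqP: nxy.
have : rkP y (y |: A).
  rewrite /rkP setU11 andbT; apply/andP; split.
    apply/chainP=> u v; rewrite !inE => /orP[/eqP->|uA] /orP[/eqP->|vA].
    - by rewrite le_refl.
    - by rewrite (le_trans (bA' _ vA) lxy) orbT.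
    - by rewrite (le_trans (bA' _ uA) lxy).
    - by move/chainP: cA; apply.
  apply/forallP=> z; apply/implyP; rewrite !inE => /orP[/eqP->|zA]; first by rewrite le_refl.
  exact: le_trans (bA' _ zA) lxy.
move/rank_ub; rewrite cardsU1 yA eA.
by [].
Qed.


Lemma chain_sub (A B : {set T}) : A \subset B -> is_chain le B -> is_chain le A.
Proof.
move=> sAB /chainP cB; apply/chainP=> x y xA yA; apply: cB; exact: (subsetP sAB).
Qed.

Lemma rank_down x k : rank le x = k.+1 -> exists2 z, plt le z x & rank le z = k.
Proof.
move=> rx.
have [A /andP[/andP[cA xA] /forallP bA] eA] := rank_ex x.
have bA' z : z \in A -> le z x by move=> zA; move/implyP: (bA z); apply.
set A' := A :\ x.
have cA' : #|A'| = k.+1 by move: eA; rewrite rx (cardsD1 x A) xA add1n => -[].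
have [z0 z0A] : exists z0, z0 \in A' by apply/card_gt0P; rewrite cA'.
case: (@arg_maxnP _ z0 (mem A') (rank le) z0A) => z zA zmax.
have zAA : z \in A by move: zA; rewrite !inE => /andP[].
have zx : z != x by move: zA; rewrite !inE => /andP[].
have hz : plt le z x by rewrite /plt zx bA'.
exists z => //.
apply/eqP; rewrite eqn_leq; apply/andP; split.
  by have := rank_mono hz; rewrite rx ltnS.
have : rkP z A'.
  have zA2 : z \in A' := zA.
  rewrite /rkP zA2 andbT; apply/andP; split.
    apply: chain_sub cA; exact: subsetDl.
  apply/forallP=> w; apply/implyP=> wA.
  have wAA : w \in A by move: wA; rewrite !inE => /andP[].
  move/chainP: cA => /(_ _ _ wAA zAA) /orP[//|lzw].
  case: (eqVneq w z) => [->|wz]; first exact: le_refl.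
  have : plt le z w by rewrite /plt eq_sym wz lzw.
  by move/rank_mono; rewrite ltnNge; move: (zmax w wA) => /= ->.
by move/rank_ub; rewrite cA' ltnS.
Qed.

Lemma chain_card_bound (phi : T -> nat) m (A : {set T}) :
  (forall x y, plt le x y -> phi x < phi y) -> is_chain le A ->
  (forall x, x \in A -> phi x <= m) -> #|A| <= m.+1.
Proof.
move=> hphi cA hm.
have inj : {in A &, injective (fun x => (inord (phi x) : 'I_m.+1))}.
  move=> x y xA yA /(congr1 val); rewrite /= !inordK ?ltnS ?hm // => e.
  case: (eqVneq x y) => // nxy.
  move/chainP: cA => /(_ _ _ xA yA) /orP[lxy|lyx].
    by have := hphi x y; rewrite /plt nxy lxy e ltnn => /(_ isT).
  by have := hphi y x; rewrite /plt eq_sym nxy lyx e ltnn => /(_ isT).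
rewrite -(card_in_imset inj).
by apply: leq_trans (max_card _) _; rewrite card_ord.
Qed.

Lemma rank_le_phi (phi : T -> nat) p :
  (forall x y, plt le x y -> phi x < phi y) -> rank le p <= phi p.
Proof.
move=> hphi.
have [A /andP[/andP[cA pA] /forallP bA] eA] := rank_ex p.
rewrite -ltnS -eA; apply: (chain_card_bound hphi cA) => x xA.
move/implyP: (bA x) => /(_ xA) lxp.
case: (eqVneq x p) => [->//|nxp].
by apply: ltnW; apply: hphi; rewrite /plt nxp.
Qed.

Lemma max_chain_ex (A : {set T}) : is_chain le A ->
  exists2 B, is_maximal_chain le B & A \subset B.
Proof.
move=> cA.
have P0 : (fun B : {set T} => is_chain le B && (A \subset B)) A by rewrite /= cA subxx.
case: (@arg_maxnP _ A (fun B : {set T} => is_chain le B && (A \subset B)) (fun B => #|B|) P0)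
  => B /andP[cB sAB] Bmax.
exists B => //.
rewrite /is_maximal_chain cB /=; apply/forallP=> C; apply/implyP=> /andP[cC sBC].
have := Bmax C; rewrite cC (subset_trans sAB sBC) => /(_ isT) hC.
by rewrite eq_sym eqEcard sBC; move: hC => /= ->.
Qed.

Lemma rank_le_n n p : ranked_of_rank le n -> rank le p <= n.
Proof.
move=> hr.
have [A /andP[/andP[cA pA] _] eA] := rank_ex p.
have [B mB sAB] := max_chain_ex cA.
by rewrite -ltnS -eA -(hr B mB); apply: subset_leq_card.
Qed.

End Gen.
Lemma CA (u v : 'I_6) : crown6_le v u -> v != u -> (v < 3) && (3 <= u).
Proof.
case: u => [[|[|[|[|[|[|u]]]]]] hu] //; case: v => [[|[|[|[|[|[|v]]]]]] hv] //.
Qed.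
Lemma CB (u : 'I_6) : 3 <= u -> exists v, crown6_le v u && (v != u).
Proof.
case: u => [[|[|[|[|[|[|u]]]]]] hu] // _.
- by exists (@Ordinal 6 0 isT).
- by exists (@Ordinal 6 1 isT).
- by exists (@Ordinal 6 2 isT).
Qed.
Lemma CC (u : 'I_6) : 3 <= u -> exists2 v : 'I_6, v < 3 & ~~ crown6_le v u.
Proof.
case: u => [[|[|[|[|[|[|u]]]]]] hu] // _.
- by exists (@Ordinal 6 2 isT).
- by exists (@Ordinal 6 0 isT).
- by exists (@Ordinal 6 1 isT).
Qed.
Lemma CD (u v w : 'I_6) : 3 <= u -> v < 3 -> w < 3 -> ~~ crown6_le v u -> ~~ crown6_le w u -> v = w.
Proof.
case: u => [[|[|[|[|[|[|u]]]]]] hu] //; case: v => [[|[|[|[|[|[|v]]]]]] hv] //;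
case: w => [[|[|[|[|[|[|w]]]]]] hw] // *; exact: val_inj.
Qed.
Lemma CE (v : 'I_6) : v < 3 -> exists2 u : 'I_6, 3 <= u & ~~ crown6_le v u.
Proof.
case: v => [[|[|[|[|[|[|v]]]]]] hv] // _.
- by exists (@Ordinal 6 4 isT).
- by exists (@Ordinal 6 5 isT).
- by exists (@Ordinal 6 3 isT).
Qed.
Lemma CF (u w v : 'I_6) : 3 <= u -> 3 <= w -> v < 3 -> ~~ crown6_le v u -> ~~ crown6_le v w -> u = w.
Proof.
case: u => [[|[|[|[|[|[|u]]]]]] hu] //; case: v => [[|[|[|[|[|[|v]]]]]] hv] //;
case: w => [[|[|[|[|[|[|w]]]]]] hw] // *; exact: val_inj.
Qed.

Section Transport.
Variables (T : finType) (le : rel T).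
Hypothesis hpo : is_poset le.

Lemma level_e i : poset_iso (level_le le i i.+1) crown6_le ->
  exists e : 'I_6 -> T,
  [/\ injective e, (forall k l, le (e k) (e l) = crown6_le k l),
      (forall k, rank le (e k) = if k < 3 then i else i.+1) &
      (forall x, i <= rank le x <= i.+1 -> exists k, e k = x)].
Proof.
case=> h [[h' hK h'K] hle].
have memc (c : level_carrier le i i.+1) : i <= rank le (val c) <= i.+1.
  by have := valP c; rewrite /level_set inE.
have key c : (rank le (val c) == i) = (h c < 3).
  have := memc c; case/andP=> r1 r2.
  case: (eqVneq (rank le (val c)) i) => [ri|rni].
    apply/esym; rewrite ltnNge; apply/negP => h3.
    case: (CB h3) => v /andP[cv nv].
    have := memc (h' v); case/andP=> r3 _.
    have : plt le (val (h' v)) (val c).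
      rewrite /plt (_ : le (val (h' v)) (val c) = level_le le i i.+1 (h' v) c) // hle h'K cv andbT; apply/negP => /eqP /val_inj e.
      by move: nv; rewrite -e h'K eqxx.
    by move/(rank_mono hpo); rewrite ri ltnNge r3.
  have rc : rank le (val c) = i.+1.
    by apply/eqP; rewrite eqn_leq r2 ltn_neqAle eq_sym rni r1.
  have [z hz rz] := rank_down hpo rc.
  have zc : z \in level_set le i i.+1 by rewrite /level_set inE rz leqnn leqnSn.
  set cz := (Sub z zc : level_carrier le i i.+1).
  move: hz; rewrite /plt (_ : le z (val c) = level_le le i i.+1 cz c) // hle => /andP[nz cr].
  have : h cz != h c by apply: contra nz => /eqP /(can_inj hK) <-.
  by move/(CA cr) => /andP[_]; rewrite leqNgt => /negbTE ->.
exists (fun k => val (h' k)); split.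
- by move=> k l /val_inj /(can_inj h'K).
- by move=> k l; rewrite -[le _ _]/(level_le le i i.+1 (h' k) (h' l)) hle !h'K.
- move=> k; have := key (h' k); rewrite h'K.
  case: (ltnP k 3) => _; first by move/eqP.
  move/negbT => ne; have := memc (h' k); case/andP=> r1 r2.
  by apply/eqP; rewrite eqn_leq r2 ltn_neqAle eq_sym ne r1.
- move=> x hx.
  have xm : x \in level_set le i i.+1 by rewrite /level_set inE.
  by exists (h (Sub x xm)); rewrite hK.
Qed.
End Transport.

Section Labels.
Variables (T : finType) (le : rel T) (n : nat).
Hypothesis hpo : is_poset le.
Hypothesis hiso : forall i, i < n -> poset_iso (level_le le i i.+1) crown6_le.
Local Notation r := (rank le).

Definition labinj (F : T -> 'I_3) k := forall x y, r x = k -> r y = k -> F x = F y -> x = y.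
Definition labsurj (F : T -> 'I_3) k := forall a : 'I_3, exists2 x, r x = k & F x = a.
Definition labcov (F : T -> 'I_3) k :=
  forall x y, r x = k -> r y = k.+1 -> le x y = (F x != F y).
Definition Inv j F := (forall k, k <= j -> labinj F k /\ labsurj F k) /\
                      (forall k, k < j -> labcov F k).

Lemma eidx j (e : 'I_6 -> T) :
  (forall k, r (e k) = if k < 3 then j else j.+1) ->
  (forall x, j <= r x <= j.+1 -> exists k, e k = x) ->
  (forall x, r x = j -> exists2 v : 'I_6, v < 3 & e v = x) /\
  (forall x, r x = j.+1 -> exists2 u : 'I_6, 3 <= u & e u = x).
Proof.
move=> er eall; split=> x rx.
  have [|k ek] := eall x; first by rewrite rx leqnn leqnSn.
  exists k => //; move: (er k); rewrite ek rx.
  by case: (ltnP k 3) => // _ /eqP; rewrite eq_sym (gtn_eqF (ltnSn j)).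
have [|k ek] := eall x; first by rewrite rx leqnSn leqnn.
exists k => //; move: (er k); rewrite ek rx.
by case: (ltnP k 3) => // _ /eqP; rewrite (gtn_eqF (ltnSn j)).
Qed.

Lemma lab_base : 0 < n -> exists F, Inv 0 F.
Proof.
move=> n0.
have [e [einj ele er eall]] := level_e hpo (hiso n0).
have [i0 _] := eidx er eall.
pose w (a : 'I_3) : 'I_6 := inord a.
have wv a : w a = a :> nat by rewrite /w inordK // (leq_trans (ltn_ord a)).
pose F x := odflt ord0 [pick a : 'I_3 | e (w a) == x].
have Fs x : r x = 0 -> e (w (F x)) = x.
  move=> rx; have [v v3 ev] := i0 x rx.
  rewrite /F; case: pickP => [a /eqP //|].
  move/(_ (Ordinal v3)) => /negbT /negP; case.
  by rewrite -ev; apply/eqP; congr e; apply: val_inj; rewrite /= /w inordK //; apply: (leq_trans v3).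
exists F; split=> // k; rewrite leqn0 => /eqP ->; split.
  by move=> x y rx ry Fxy; rewrite -(Fs x rx) -(Fs y ry) Fxy.
move=> a; exists (e (w a)).
  by rewrite er wv ltn_ord.
have: e (w (F (e (w a)))) = e (w a) by apply: Fs; rewrite er wv ltn_ord.
by move/einj/(congr1 (@nat_of_ord 6)); rewrite !wv => /val_inj.
Qed.


Lemma lab_step j F : j < n -> Inv j F -> exists F', Inv j.+1 F'.
Proof.
move=> jn [Hil Hcov].
have [e [einj ele er eall]] := level_e hpo (hiso jn).
have [i0 i1] := eidx er eall.
have NN1 y : r y = j.+1 -> exists2 z, r z = j & ~~ le z y.
  move=> ry; have [u u3 <-] := i1 y ry; have [v v3 nc] := CC u3.
  by exists (e v); rewrite ?er ?v3 ?ele.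
have NN2 y z z' : r y = j.+1 -> r z = j -> r z' = j -> ~~ le z y -> ~~ le z' y -> z = z'.
  move=> ry rz rz'; have [u u3 <-] := i1 y ry; have [v v3 <-] := i0 z rz.
  have [v' v3' <-] := i0 z' rz'; rewrite !ele => h1 h2.
  by rewrite (CD u3 v3 v3' h1 h2).
have NN3 z : r z = j -> exists2 y, r y = j.+1 & ~~ le z y.
  move=> rz; have [v v3 <-] := i0 z rz; have [u u3 nc] := CE v3.
  by exists (e u); rewrite ?er ?ele // ltnNge u3.
have NN4 y y' z : r y = j.+1 -> r y' = j.+1 -> r z = j -> ~~ le z y -> ~~ le z y' -> y = y'.
  move=> ry ry' rz; have [u u3 <-] := i1 y ry; have [u' u3' <-] := i1 y' ry'.
  have [v v3 <-] := i0 z rz; rewrite !ele => h1 h2.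
  by rewrite (CF u3 u3' v3 h1 h2).
have [injj surjj] := Hil j (leqnn j).
pose E (a : 'I_3) x := odflt x [pick z | (r z == j) && (F z == a)].
have Es a x : r (E a x) = j /\ F (E a x) = a.
  rewrite /E; case: pickP => [z /andP[/eqP -> /eqP ->] //|].
  have [z rz Fz] := surjj a.
  by move/(_ z); rewrite rz Fz !eqxx.
have Eu a x z : r z = j -> F z = a -> E a x = z.
  move=> rz Fz; have [rE FE] := Es a x; apply: injj => //; by rewrite FE.
pose G y := odflt ord0 [pick a | ~~ le (E a y) y].
have Gs y : r y = j.+1 -> ~~ le (E (G y) y) y.
  move=> ry; rewrite /G; case: pickP => [a //|].
  have [z rz nz] := NN1 y ry.
  by move/(_ (F z)); rewrite (Eu _ _ z rz) // nz.
pose F' x := if r x == j.+1 then G x else F x.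
have F'o x : r x != j.+1 -> F' x = F x by rewrite /F' => /negbTE ->.
have F'n x : r x = j.+1 -> F' x = G x by rewrite /F' => ->; rewrite eqxx.
exists F'; split.
  move=> k; rewrite leq_eqVlt => /orP[/eqP ->|]; last first.
    rewrite ltnS => kj; have [ik sk] := Hil k kj.
    have nk : k != j.+1 by rewrite neq_ltn ltnS kj.
    split.
      move=> x y rx ry; rewrite !F'o ?rx ?ry //; exact: ik.
    move=> a; have [x rx Fx] := sk a; exists x => //; by rewrite F'o ?rx.
  split.
    move=> y y' ry ry'; rewrite !F'n // => Gy.
    have h1 := Gs y ry; have h2 := Gs y' ry'.
    have [rE FE] := Es (G y) y.
    have e2 : E (G y') y' = E (G y) y by apply: Eu => //; rewrite FE Gy.
    rewrite e2 in h2.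
    exact: (NN4 y y' (E (G y) y)).
  move=> a.
  have [rE FE] := Es a (E a (e ord0)).
  have [y ry ny] := NN3 _ rE.
  exists y => //; rewrite F'n //.
  have [rG FG] := Es (G y) y.
  have := NN2 y _ _ ry rG rE (Gs y ry) ny.
  by move/(congr1 F); rewrite FG FE.
move=> k; rewrite ltnS leq_eqVlt => /orP[/eqP ->|kj]; last first.
  move=> x y rx ry.
  have nx : r x != j.+1 by rewrite rx neq_ltn ltnS ltnW.
  have ny : r y != j.+1 by rewrite ry neq_ltn ltnS kj.
  by rewrite !F'o // (Hcov k kj).
move=> x y rx ry.
have nx : r x != j.+1 by rewrite rx neq_ltn ltnSn.
rewrite (F'n y ry) (F'o x nx).
have [rG FG] := Es (G y) y.
case: (eqVneq (F x) (G y)) => [Fx|Fx] /=.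
  have -> : x = E (G y) y by apply: injj => //; rewrite FG.
  by apply/negbTE/Gs.
apply/negbFE/negP => /negP nxy.
have := NN2 y _ _ ry rx rG nxy (Gs y ry).
by move=> exy; move: Fx; rewrite exy FG eqxx.
Qed.

Lemma lab_all : 0 < n -> exists F, Inv n F.
Proof.
move=> n0.
suff H : forall j, j <= n -> exists F, Inv j F by apply: H.
elim=> [_|j IH jn]; first exact: lab_base.
have [F HF] := IH (ltnW jn).
exact: lab_step jn HF.
Qed.

End Labels.

Lemma third_ex (a b : 'I_3) : exists c : 'I_3, (c != a) && (c != b).
Proof.
case: a => [[|[|[|a]]] ha] //; case: b => [[|[|[|b]]] hb] //.
all: first [ by exists (@Ordinal 3 0 isT) | by exists (@Ordinal 3 1 isT) | by exists (@Ordinal 3 2 isT) ].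
Qed.

Definition third (a b : 'I_3) : 'I_3 := odflt ord0 [pick c | (c != a) && (c != b)].
Lemma thirdP a b : (third a b != a) && (third a b != b).
Proof.
rewrite /third; case: pickP => [c //|H].
by have [c] := third_ex a b; rewrite H.
Qed.

Definition Can (n : nat) : finType := ('I_3 * 'I_n.+1)%type.
Definition canle n : rel (Can n) := fun p q =>
  (p == q) || (p.2.+2 <= q.2) || ((p.2.+1 == q.2) && (p.1 != q.1)).
Arguments canle : clear implicits.

Lemma canle_lt n (p q : Can n) : canle n p q -> p != q -> p.2 < q.2.
Proof.
rewrite /canle => /orP[/orP[/eqP->|h]|/andP[/eqP h _]]; first by rewrite eqxx.
  by move=> _; apply: leq_trans h.
by rewrite -h.
Qed.

Lemma canle_po n : is_poset (canle n).
Proof.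
split.
- by move=> x; rewrite /canle eqxx.
- move=> x y hxy hyx; apply/eqP/negP => /negP nxy.
  have := canle_lt hxy nxy; have := canle_lt hyx; rewrite eq_sym => /(_ nxy).
  by move=> h1 h2; move: (ltn_trans h1 h2); rewrite ltnn.
- move=> x y z hxy hyz.
  case: (eqVneq x y) => [->//|nxy]; case: (eqVneq y z) => [<-//|nyz].
  have h1 := canle_lt hxy nxy; have h2 := canle_lt hyz nyz.
  have h3 : (x.2).+2 <= z.2 by apply: leq_trans h2; rewrite ltnS.
  by rewrite /canle h3 orbT.
Qed.

Section Uniq.
Variables (T : finType) (le : rel T) (n : nat).
Hypothesis hs : six_stack le n.
Local Notation r := (rank le).

Lemma iso_to_can : poset_iso le (canle n).
Proof.
case: hs => hpo n0 hr hiso.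
have [F [Hil Hcov]] := lab_all hpo hiso n0.
have rn x : r x <= n := rank_le_n hpo x hr.
have far d : forall x y, r y = r x + d.+2 -> le x y.
  elim: d => [|d IH] x y ry.
    have xn : r x < n by have := rn y; rewrite ry; lia.
    have x1n : (r x).+1 < n by have := rn y; rewrite ry; lia.
    have [z rz Fz] := (Hil (r x).+1 (ltnW x1n)).2 (third (F x) (F y)).
    have /andP[t1 t2] := thirdP (F x) (F y).
    apply: (le_trans hpo (y := z)).
      by rewrite (Hcov (r x) xn x z) // Fz eq_sym.
    by rewrite (Hcov (r x).+1 x1n z y) // ?Fz // ry addn2.
  have hb : r x + d.+2 < n by have := rn y; rewrite ry; lia.
  have [z rz Fz] := (Hil (r x + d.+2) (ltnW hb)).2 (third (F y) (F y)).
  have /andP[t1 _] := thirdP (F y) (F y).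
  apply: (le_trans hpo (y := z)); first by apply: IH.
  by rewrite (Hcov (r x + d.+2) hb z y) // ?Fz // ry addnS.
have [x0 _ _] := (Hil 0 (leq0n n)).2 ord0.
pose f x : Can n := (F x, inord (r x)).
have f2 x : (f x).2 = r x :> nat by rewrite /= inordK // ltnS.
pose g (p : Can n) := odflt x0 [pick x | (r x == p.2) && (F x == p.1)].
exists f; split.
  exists g.
    move=> x; rewrite /g; case: pickP => [z /andP[/eqP rz /eqP Fz]|].
      by apply: ((Hil (r x) (rn x)).1) => //; rewrite rz f2.
    by move/(_ x); rewrite f2 !eqxx.
  case=> a k; rewrite /g; case: pickP => [z /andP[/eqP rz /eqP Fz]|] /=.
    by rewrite /f Fz; congr pair; apply: val_inj; rewrite /= rz inordK.
  have kn : k <= n by rewrite -ltnS.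
  have [z rz Fz] := (Hil k kn).2 a.
  by move/(_ z); rewrite rz Fz !eqxx.
have Hle x y : le x y -> x != y -> r x < r y.
  by move=> lxy nxy; apply: (rank_mono hpo); rewrite /plt nxy.
move=> x y; rewrite /canle /= xpair_eqE.
have -> : (inord (r x) == inord (r y) :> 'I_n.+1) = (r x == r y).
  by rewrite -val_eqE /= !inordK // ltnS.
rewrite !inordK ?ltnS //.
case: (ltngtP (r x) (r y)) => hxy.
- rewrite andbF /=.
  case: (eqVneq (r x).+1 (r y)) => [e|ne] /=.
    have -> : ((r x).+1 < r y) = false by apply/negbTE; lia.
    rewrite /= (Hcov (r x)) //; have := rn y; lia.
  have h2 : (r x).+2 <= r y by move: hxy ne; lia.
  rewrite h2; apply: (far (r y - (r x).+2)); lia.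
- rewrite andbF /=.
  have -> : ((r x).+1 < r y) = false by apply/negbTE; lia.
  have -> : ((r x).+1 == r y) = false by apply/negbTE; lia.
  apply/negP => lxy.
  case: (eqVneq x y) => [exy|nxy]; first by move: hxy; rewrite exy ltnn.
  by have := Hle _ _ lxy nxy; rewrite ltnNge ltnW.
- rewrite andbT.
  have -> : ((r x).+1 < r y) = false by apply/negbTE; lia.
  have -> : ((r x).+1 == r y) = false by apply/negbTE; lia.
  rewrite !orbF.
  apply/idP/eqP => [lxy|Fxy].
    case: (eqVneq x y) => [->//|nxy].
    by have := Hle _ _ lxy nxy; rewrite hxy ltnn.
  have -> : x = y by apply: (Hil (r x) (rn x)).1.
  exact: le_refl.
Qed.
End Uniq.

Section Exist.
Variable n : nat.
Hypothesis n0 : 0 < n.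
Local Notation le := (canle n).

Lemma canle_plt (p q : Can n) : plt le p q -> p.2 < q.2.
Proof. by case/andP=> npq lpq; apply: canle_lt. Qed.

Lemma can_rank (p : Can n) : rank le p = p.2.
Proof.
apply/eqP; rewrite eqn_leq; apply/andP; split.
  exact: (rank_le_phi (canle_po n) (phi := fun q : Can n => nat_of_ord q.2) p canle_plt).
suff H : forall k (p : Can n), p.2 = k :> nat -> k <= rank le p by apply: H.
elim=> [//|k IH] {}p pk.
pose q : Can n := (third p.1 p.1, inord k).
have kn : k < n.+1 by apply: ltn_trans (ltn_ord p.2); rewrite pk.
have q2 : q.2 = k :> nat by rewrite /= inordK.
have hq : plt le q p.
  have /andP[t _] := thirdP p.1 p.1.
  rewrite /plt /canle; apply/andP; split.
    by apply/negP => /eqP e; move: q2; rewrite e pk; lia.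
  by rewrite q2 pk eqxx t orbT.
apply: leq_trans (rank_mono (canle_po n) hq); rewrite ltnS; exact: IH.
Qed.

Lemma can_chain_eq (A : {set Can n}) p q : is_chain le A -> p \in A -> q \in A ->
  p.2 = q.2 :> nat -> p = q.
Proof.
move/chainP => cA pA qA e; case: (eqVneq p q) => // npq.
case/orP: (cA p q pA qA) => h.
  by have := canle_lt h npq; rewrite e ltnn.
by have := canle_lt h; rewrite eq_sym => /(_ npq); rewrite e ltnn.
Qed.

Lemma can_ranked : ranked_of_rank le n.
Proof.
move=> A /andP[cA /forallP mA].
apply/eqP; rewrite eqn_leq; apply/andP; split.
  apply: (chain_card_bound (phi := fun q : Can n => nat_of_ord q.2) canle_plt cA).
  by move=> x _; rewrite -ltnS.
have hit (k : 'I_n.+1) : exists2 q, q \in A & q.2 = k.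
  case: (pickP [pred q in A | q.2 == k]) => [q /andP[qA /eqP e]|nh]; first by exists q.
  exfalso.
  have nk q : q \in A -> q.2 != k by move=> qA; have := nh q; rewrite /= qA => /negbT.
  pose bl := if [pick q in A | q.2.+1 == k :> nat] is Some q then q.1 else ord0.
  pose cl := if [pick q in A | q.2 == k.+1 :> nat] is Some q then q.1 else ord0.
  pose x : Can n := (third bl cl, k).
  have /andP[tb tc] := thirdP bl cl.
  have comp q : q \in A -> le q x || le x q.
    move=> qA; have qk := nk q qA.
    case: (ltngtP q.2 k) => hqk; last by move: qk => /eqP []; apply: val_inj.
      case: (eqVneq (q.2).+1 k) => [e1|ne1].
        have : bl = q.1.
          rewrite /bl; case: pickP => [q' /andP[q'A /eqP e']|none].
            by congr (_.1); apply: (can_chain_eq cA q'A qA); apply/eqP; rewrite -eqSS e' e1.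
          by have := none q; rewrite qA e1 eqxx.
        by move=> eb; rewrite /canle /= e1 eqxx -eb [bl == _]eq_sym (negbTE tb) !orbT.
      have h2 : (q.2).+2 <= k by move: hqk ne1; lia.
      by rewrite /canle /= h2 orbT.
    case: (eqVneq (k.+1 : nat) q.2) => [e1|ne1].
      have : cl = q.1.
        rewrite /cl; case: pickP => [q' /andP[q'A /eqP e']|none].
          by congr (_.1); apply: (can_chain_eq cA q'A qA); rewrite e' e1.
        by have := none q; rewrite qA -e1 eqxx.
      by move=> ec; rewrite /canle /= -e1 eqxx -ec (negbTE tc) !orbT.
    have h2 : k.+2 <= q.2 by move: hqk ne1; lia.
    by rewrite /canle /= h2 !orbT.
  have cx : is_chain le (x |: A).
    apply/chainP => u v; rewrite !inE => /orP[/eqP->|uA] /orP[/eqP->|vA].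
    - by rewrite /canle eqxx.
    - by rewrite orbC; apply: comp.
    - by apply: comp.
    - by move/chainP: cA; apply.
  have := mA (x |: A); rewrite cx subsetUr /=.
  move=> hh; move: (eqP hh) => eA.
  have : x \in A by rewrite -eA setU11.
  by move/nk; rewrite eqxx.
have e : [set q.2 | q in A] = setT.
  apply/setP => k; rewrite inE.
  by have [q qA <-] := hit k; apply: imset_f.
apply: leq_trans (leq_imset_card (fun q : Can n => q.2) A).
by rewrite e cardsT card_ord.
Qed.

End Exist.

Section CrownCan.
Variables (n i : nat).
Hypothesis hi : i < n.
Local Notation le := (canle n).

Lemma canleE (p q : Can n) : le p q =
  [|| ((p.1 : nat) == q.1) && ((p.2 : nat) == q.2), (p.2 : nat).+2 <= q.2 |
      ((p.2 : nat).+1 == q.2) && ((p.1 : nat) != q.1)].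
Proof. rewrite /canle; move: p q; rewrite /Can => -[a b] [c d] /=; rewrite xpair_eqE -orbA; reflexivity. Qed.

Definition pt (k : 'I_6) : Can n :=
  (inord (if k < 3 then (k : nat) else (k + 2) %% 3), inord (if k < 3 then i else i.+1)).

Lemma ptE1 k : ((pt k).1 : nat) = if k < 3 then (k : nat) else (k + 2) %% 3.
Proof. rewrite /= inordK //; case: ifP => // _; by rewrite ltn_mod. Qed.

Lemma ptE2 k : ((pt k).2 : nat) = if k < 3 then i else i.+1.
Proof. by rewrite /= inordK //; case: ifP => _; rewrite ltnS // ltnW. Qed.

Lemma pt_rank k : rank le (pt k) = if k < 3 then i else i.+1.
Proof. by rewrite (can_rank (leq_ltn_trans (leq0n i) hi)) ptE2. Qed.

Lemma pt_crown k l : le (pt k) (pt l) = crown6_le k l.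
Proof.
rewrite canleE !ptE1 !ptE2 /crown6_le.
case: k => [[|[|[|[|[|[|k]]]]]] hk] //; case: l => [[|[|[|[|[|[|l]]]]]] hl] //=; rewrite ?in_cons ?in_nil /=; try lia.
Qed.

Lemma can_crown : poset_iso (level_le le i i.+1) crown6_le.
Proof.
have memk (k : 'I_6) : pt k \in level_set le i i.+1.
  rewrite /level_set inE pt_rank.
  by case: ifP => _; lia.
pose h' k : level_carrier le i i.+1 := Sub (pt k) (memk k).
pose h (c : level_carrier le i i.+1) : 'I_6 :=
  inord (if ((val c).2 : nat) == i then ((val c).1 : nat) else 3 + ((val c).1 + 1) %% 3).
have hval (c : level_carrier le i i.+1) :
    (h c : nat) = if ((val c).2 : nat) == i then ((val c).1 : nat) else 3 + ((val c).1 + 1) %% 3.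
  rewrite /h inordK //; case: ifP => _; first by apply: (ltn_trans (ltn_ord _)).
  have := ltn_mod ((val c).1 + 1) 3; lia.
have hv (c : level_carrier le i i.+1) : val (h' (h c)) = val c.
  move: (hval c); case: c => [[a b] hb] /= hk.
  have hb2 : i <= b <= i.+1.
    by have := hb; rewrite /level_set inE (can_rank (leq_ltn_trans (leq0n i) hi)).
  rewrite /h' /=; move: hk; set k := h _ => hk.
  have e1 := ptE1 k; have e2 := ptE2 k.
  rewrite [pt k]surjective_pairing; congr pair; apply: val_inj; rewrite /= ?e1 ?e2 hk.
    have ha := ltn_ord a; case: (eqVneq (b : nat) i) => eb /=.
      by rewrite ha.
    by move: ha; case: (nat_of_ord a) => [|[|[|]]].
  case: (eqVneq (b : nat) i) => eb /=; first by rewrite ltn_ord eb.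
  lia.
have hK : cancel h h' by move=> c; apply: val_inj; apply: hv.
have h'K : cancel h' h.
  move=> k; apply: val_inj; rewrite /= hval /= ptE1 ptE2.
  by case: k => [[|[|[|[|[|[|k]]]]]] hk] //=; rewrite ?eqxx ?(gtn_eqF (ltnSn i)).
exists h; split; first by exists h'.
move=> c d; rewrite /level_le -(hv c) -(hv d) /= pt_crown.
done.
Qed.
End CrownCan.

Lemma iso_sym (T1 T2 : finType) (le1 : rel T1) (le2 : rel T2) :
  poset_iso le1 le2 -> poset_iso le2 le1.
Proof.
case=> f [[g fK gK] hf]; exists g; split; first by exists f.
by move=> x y; rewrite hf !gK.
Qed.

Lemma iso_trans (T1 T2 T3 : finType) (le1 : rel T1) (le2 : rel T2) (le3 : rel T3) :
  poset_iso le1 le2 -> poset_iso le2 le3 -> poset_iso le1 le3.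
Proof.
case=> f [[f' fK f'K] hf] [g [[g' gK g'K] hg]].
exists (g \o f); split; first by exists (f' \o g') => x /=; rewrite ?gK ?fK ?g'K ?f'K.
by move=> x y; rewrite hf hg.
Qed.

Unset Implicit Arguments.
Theorem proposition4p1 (n : nat) (hn : 1 <= n) :
  (exists (T : finType) (le : rel T), six_stack le n) /\
  (forall (T1 T2 : finType) (le1 : rel T1) (le2 : rel T2),
      six_stack le1 n -> six_stack le2 n -> poset_iso le1 le2).
Proof.
split.
  exists (Can n), (canle n); split.
  - exact: canle_po.
  - exact: hn.
  - exact: can_ranked hn.
  - by move=> i hi; apply: can_crown.
move=> T1 T2 le1 le2 h1 h2.
apply: iso_trans (iso_to_can h1) (iso_sym (iso_to_can h2)).
Qed.
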